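(* Let $I$ and $J$ be disjoint subsets of $\mathbb N$, $v$ a value, $p_i\in[0,1]$ ($i\in I$), $q_j\in[0,1]$ ($j\in J$), and let $M$ be a well-formed network with $M\equiv N\mid\prod_{i\in I}m_i[\mathsf{snd}\langle v\rangle_{p_i}]^{\nu_{m_i}}\mid\prod_{j\in J}n_j[\mathsf{fwd}_{q_j}]^{\nu_{n_j}}$ such that for all $i\in I$: (1) $\{n_j: j\in J\}\subseteq\nu_{m_i}\subseteq\mathrm{nds}(M)$; (2) every node $k[P]^\mu$ of $N$ with $k\in\nu_{m_i}$ satisfies $\neg\mathrm{rcv}(P)$. Let $O=N\mid\prod_{i\in I}m_i[\mathsf{nil}]^{\nu_{m_i}}\mid\prod_{j\in J}n_j[\mathsf{resnd}\langle v\rangle_{q_j}]^{\nu_{n_j}}$ and, for any partition $I_1\cup I_2\cup I_3$ of $I$, $O_{I_1,I_2,I_3}=N\mid\prod_{i\in I_1}m_i[{!}\langle v\rangle]^{\nu_{m_i}}\mid\prod_{i\in I_2}m_i[\mathsf{nil}]^{\nu_{m_i}}\mid\prod_{i\in I_3}m_i[\mathsf{snd}\langle v\rangle_{p_i}]^{\nu_{m_i}}\mid\prod_{j\in J}n_j[\mathsf{resnd}\langle v\rangle_{q_j}]^{\nu_{n_j}}$. Then $O_{I_1,I_2,I_3}\overset{\hat\tau}{\Longrightarrow}\overline O$.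
   Context: The process calculus pTCWS. Processes $P,Q$ and probabilistic choices $C,D$ are $P ::= \mathsf{nil} \mid {!}\langle u\rangle.C \mid \lfloor ?(x).C\rfloor D \mid \tau.C \mid \sigma.C \mid X \mid \mathsf{fix}\,X.P$ and $C ::= \bigoplus_{i\in I} p_i{:}P_i$ ($I$ finite non-empty, $p_i\in(0,1]$, $\sum_i p_i=1$); in $\mathsf{fix}\,X.P$ every occurrence of $X$ is time-guarded (under a $\sigma$-prefix or in a timeout branch $D$). $1{:}P$ is written $P$; $P\oplus_pQ$ is $p{:}P\oplus(1-p){:}Q$; ${!}\langle v\rangle$ is ${!}\langle v\rangle.\mathsf{nil}$; $?(x).C$ abbreviates $\mathsf{fix}\,X.\lfloor ?(x).C\rfloor X$ ($X$ not free in $C$). Networks: $M::=\mathbf 0\mid M_1\mid M_2\mid n[P]^\nu\mid\bot$, where $n[P]^\nu$ is a node named $n$ running closed process $P$ with neighbour set $\nu$, and $\bot$ is a stuck network; $\prod$ is iterated $\mid$; $\mathrm{nds}(M)$ is the set of node names. Structural congruence $\equiv$: least equivalence preserved by $\mid$, making $\mid$ a commutative monoid with unit $\mathbf 0$, with $n[\mathsf{fix}\,X.P]^\nu\equiv n[P\{\mathsf{fix}\,X.P/X\}]^\nu$. Well-formed: no node is its own neighbour, distinct names, symmetric neighbourhood, connected neighbour graph; all networks are well-formed. $\mathrm{rcv}(P)$ holds iff $n[P]^\nu\equiv n[\lfloor ?(x).C\rfloor D]^\nu$ for some $x,C,D$. Semantics: finite-support probability distributions on networks, $\overline M$ Dirac;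 $[\![n[\bigoplus_i p_i{:}P_i]^\nu]\!]=\sum_ip_i\overline{n[P_i]^\nu}$; $(\Delta\mid\Theta)(M_1\mid M_2)=\Delta(M_1)\Theta(M_2)$. Transitions $M\xrightarrow{\lambda}\Delta$, $\lambda\in\{m!v\triangleright\nu, m?v,\tau,\sigma\}$, form the least relation closed under: (Snd) $m[{!}\langle v\rangle.C]^\nu\xrightarrow{m!v\triangleright\nu}[\![m[C]^\nu]\!]$; (Rcv) if $m\in\nu$: $n[\lfloor ?(x).C\rfloor D]^\nu\xrightarrow{m?v}[\![n[C\{v/x\}]^\nu]\!]$; $\mathbf 0\xrightarrow{m?v}\overline{\mathbf 0}$; (RcvEnb) if $\neg(m\in\nu\wedge\mathrm{rcv}(P))$ and $m\ne n$: $n[P]^\nu\xrightarrow{m?v}\overline{n[P]^\nu}$; (RcvPar) $M\xrightarrow{m?v}\Delta$, $N\xrightarrow{m?v}\Theta$ give $M\mid N\xrightarrow{m?v}\Delta\mid\Theta$; (Bcast) $M\xrightarrow{m!v\triangleright\nu}\Delta$, $N\xrightarrow{m?v}\Theta$ give $M\mid N\xrightarrow{m!v\triangleright(\nu\setminus\mathrm{nds}(N))}\Delta\mid\Theta$ (and symmetrically); (Tau) $m[\tau.C]^\nu\xrightarrow{\tau}[\![m[C]^\nu]\!]$; (TauPar) $M\xrightarrow{\tau}\Delta$ and $N$ not of the form $\bot\mid N'$ give $M\mid N\xrightarrow{\tau}\Delta\mid\overline N$ (and symmetrically); $\mathbf 0\xrightarrow{\sigma}\overline{\mathbf 0}$;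 $n[\mathsf{nil}]^\nu\xrightarrow{\sigma}\overline{n[\mathsf{nil}]^\nu}$; (Timeout) $n[\lfloor ?(x).C\rfloor D]^\nu\xrightarrow{\sigma}[\![n[D]^\nu]\!]$; (Sleep) $n[\sigma.C]^\nu\xrightarrow{\sigma}[\![n[C]^\nu]\!]$; ($\sigma$-Par) $M\xrightarrow{\sigma}\Delta$, $N\xrightarrow{\sigma}\Theta$ give $M\mid N\xrightarrow{\sigma}\Delta\mid\Theta$; (Rec) $n[P\{\mathsf{fix}\,X.P/X\}]^\nu\xrightarrow{\lambda}\Delta$ gives $n[\mathsf{fix}\,X.P]^\nu\xrightarrow{\lambda}\Delta$; (ShhSnd) $M\xrightarrow{m!v\triangleright\emptyset}\Delta$ gives $M\xrightarrow{\tau}\Delta$. $\bot$ has no transitions. Weak transitions: $M\xrightarrow{\hat\tau}\Delta$ iff $M\xrightarrow{\tau}\Delta$ or $\Delta=\overline M$; for a sub-distribution $\Delta=\sum_{i\in I}p_i\overline{M_i}$, $\Delta\xrightarrow{\hat\tau}\Theta$ iff $M_i\xrightarrow{\hat\tau}\Theta_i$ for all $i$ and $\Theta=\sum_ip_i\Theta_i$; $\overset{\hat\tau}{\Longrightarrow}$ is the reflexive-transitive closure of $\xrightarrow{\hat\tau}$ (starting from $\overline M$). Gossip processes: $\mathsf{snd}\langle u\rangle_p=\tau.({!}\langle u\rangle\oplus_p\mathsf{nil})$, $\mathsf{resnd}\langle u\rangle_p=\sigma.\mathsf{snd}\langle u\rangle_p$, $\mathsf{fwd}_p=?(x).\mathsf{resnd}\langle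 x\rangle_p$. *)

(* Defs.v *)
From Stdlib Require Import Reals List Permutation Relations ClassicalEpsilon.
Import ListNotations.
Open Scope R_scope.

Set Implicit Arguments.

Section PTCWS.

Variable V : Type.

Inductive term : Type :=
| TVal (v : V)
| TVar (x : nat).

(** Processes; a probabilistic choice  (+)_{i in I} p_i : P_i  is the finite
    list  [(p_1,P_1); ...; (p_k,P_k)]. *)
Inductive proc : Type :=
| Nil
| Snd (u : term) (C : list (R * proc))
| RcvTO (x : nat) (C : list (R * proc)) (D : list (R * proc)) (* |_ ?(x).C _| D *)
| Tau (C : list (R * proc))
| Sigma (C : list (R * proc))
| PVar (X : nat)
| Fix (X : nat) (P : proc).

Definition choice := list (R * proc).

(** Substitution of a value v for the variable x (the substituted term is
    closed, so no capture can occur; ?(x) rebinds x in C only). *)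
Fixpoint subst_val (v : V) (x : nat) (P : proc) : proc :=
  let st u := match u with TVar y => if Nat.eqb y x then TVal v else u | _ => u end in
  match P with
  | Nil => Nil
  | Snd u C => Snd (st u) (map (fun pq => (fst pq, subst_val v x (snd pq))) C)
  | RcvTO y C D =>
      RcvTO y (if Nat.eqb y x then C
               else map (fun pq => (fst pq, subst_val v x (snd pq))) C)
            (map (fun pq => (fst pq, subst_val v x (snd pq))) D)
  | Tau C => Tau (map (fun pq => (fst pq, subst_val v x (snd pq))) C)
  | Sigma C => Sigma (map (fun pq => (fst pq, subst_val v x (snd pq))) C)
  | PVar X => PVar X
  | Fix X Q => Fix X (subst_val v x Q)
  end.

Definition subst_val_choice (v : V) (x : nat) (C : choice) : choice :=
  map (fun pq => (fst pq, subst_val v x (snd pq))) C.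

Fixpoint subst_proc (Q : proc) (X : nat) (P : proc) : proc :=
  match P with
  | Nil => Nil
  | Snd u C => Snd u (map (fun pq => (fst pq, subst_proc Q X (snd pq))) C)
  | RcvTO y C D =>
      RcvTO y (map (fun pq => (fst pq, subst_proc Q X (snd pq))) C)
              (map (fun pq => (fst pq, subst_proc Q X (snd pq))) D)
  | Tau C => Tau (map (fun pq => (fst pq, subst_proc Q X (snd pq))) C)
  | Sigma C => Sigma (map (fun pq => (fst pq, subst_proc Q X (snd pq))) C)
  | PVar Y => if Nat.eqb Y X then Q else PVar Y
  | Fix Y P' => if Nat.eqb Y X then Fix Y P' else Fix Y (subst_proc Q X P')
  end.

Inductive network : Type :=
| Zero
| Par (M1 M2 : network)
| Node (n : nat) (P : proc) (nu : list nat)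
| Bot.

Fixpoint nds (M : network) : list nat :=
  match M with
  | Zero | Bot => []
  | Par M1 M2 => nds M1 ++ nds M2
  | Node n _ _ => [n]
  end.

Fixpoint nodes (M : network) : list (nat * proc * list nat) :=
  match M with
  | Zero | Bot => []
  | Par M1 M2 => nodes M1 ++ nodes M2
  | Node n P nu => [(n, P, nu)]
  end.

Fixpoint has_bot (M : network) : Prop :=
  match M with
  | Bot => True
  | Par M1 M2 => has_bot M1 \/ has_bot M2
  | _ => False
  end.

Definition prodn (f : nat -> network) (l : list nat) : network :=
  fold_right (fun i acc => Par (f i) acc) Zero l.

Inductive scong : network -> network -> Prop :=
| sc_refl M : scong M M
| sc_sym M N : scong M N -> scong N M
| sc_trans M N L : scong M N -> scong N L -> scong M L
| sc_par M M' N N' : scong M M' -> scong N N' -> scong (Par M N) (Par M' N')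
| sc_comm M N : scong (Par M N) (Par N M)
| sc_assoc M N L : scong (Par (Par M N) L) (Par M (Par N L))
| sc_unit M : scong (Par M Zero) M
| sc_fix n X P nu : scong (Node n (Fix X P) nu) (Node n (subst_proc (Fix X P) X P) nu).

Definition rcv (P : proc) : Prop :=
  exists n nu x C D, scong (Node n P nu) (Node n (RcvTO x C D) nu).

Definition node_nbrs (M : network) : list (nat * list nat) :=
  map (fun t => (fst (fst t), snd t)) (nodes M).

Definition nbr_adj (M : network) (a b : nat) : Prop :=
  exists nu, In (a, nu) (node_nbrs M) /\ In b nu /\ In b (nds M).

Definition well_formed (M : network) : Prop :=
  (forall n nu, In (n, nu) (node_nbrs M) -> ~ In n nu) /\
  NoDup (nds M) /\
  (forall n nu m mu, In (n, nu) (node_nbrs M) -> In (m, mu) (node_nbrs M) ->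
                     (In m nu <-> In n mu)) /\
  (forall a b, In a (nds M) -> In b (nds M) -> clos_refl_trans nat (nbr_adj M) a b).

(** Distributions: mass functions on networks (only finite-support ones arise). *)
Definition dist := network -> R.

Definition dirac (M : network) : dist :=
  fun N => if excluded_middle_informative (N = M) then 1 else 0.

Definition sem_node (n : nat) (C : choice) (nu : list nat) : dist :=
  fun N => fold_right (fun pq acc => fst pq * dirac (Node n (snd pq) nu) N + acc) 0 C.

Definition dpar (D T : dist) : dist :=
  fun M => match M with Par M1 M2 => D M1 * T M2 | _ => 0 end.

Definition minus_nds (nu : list nat) (N : network) : list nat :=
  filter (fun k => negb (existsb (Nat.eqb k) (nds N))) nu.

Definition not_bot_par (N : network) : Prop :=
  match N with Par Bot _ => False | _ => True end.

Inductive label : Type :=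
| LSnd (m : nat) (v : V) (nu : list nat)
| LRcv (m : nat) (v : V)
| LTau
| LSigma.

Inductive step : network -> label -> dist -> Prop :=
| st_snd m v C nu :
    step (Node m (Snd (TVal v) C) nu) (LSnd m v nu) (sem_node m C nu)
| st_rcv m n nu x C D v :
    In m nu ->
    step (Node n (RcvTO x C D) nu) (LRcv m v) (sem_node n (subst_val_choice v x C) nu)
| st_rcv0 m v : step Zero (LRcv m v) (dirac Zero)
| st_rcvenb m n P nu v :
    ~ (In m nu /\ rcv P) -> m <> n ->
    step (Node n P nu) (LRcv m v) (dirac (Node n P nu))
| st_rcvpar M N m v D T :
    step M (LRcv m v) D -> step N (LRcv m v) T -> step (Par M N) (LRcv m v) (dpar D T)
| st_bcastl M N m v nu D T :
    step M (LSnd m v nu) D -> step N (LRcv m v) T ->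
    step (Par M N) (LSnd m v (minus_nds nu N)) (dpar D T)
| st_bcastr M N m v nu D T :
    step M (LSnd m v nu) D -> step N (LRcv m v) T ->
    step (Par N M) (LSnd m v (minus_nds nu N)) (dpar T D)
| st_tau m C nu : step (Node m (Tau C) nu) LTau (sem_node m C nu)
| st_taul M N D :
    step M LTau D -> not_bot_par N -> step (Par M N) LTau (dpar D (dirac N))
| st_taur M N D :
    step M LTau D -> not_bot_par N -> step (Par N M) LTau (dpar (dirac N) D)
| st_sig0 : step Zero LSigma (dirac Zero)
| st_signil n nu : step (Node n Nil nu) LSigma (dirac (Node n Nil nu))
| st_timeout n x C D nu : step (Node n (RcvTO x C D) nu) LSigma (sem_node n D nu)
| st_sleep n C nu : step (Node n (Sigma C) nu) LSigma (sem_node n C nu)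
| st_sigpar M N D T :
    step M LSigma D -> step N LSigma T -> step (Par M N) LSigma (dpar D T)
| st_rec n X P nu l D :
    step (Node n (subst_proc (Fix X P) X P) nu) l D -> step (Node n (Fix X P) nu) l D
| st_shh M m v D : step M (LSnd m v []) D -> step M LTau D.

Definition tau_hat (M : network) (D : dist) : Prop :=
  step M LTau D \/ D = dirac M.

Definition lift_tau_hat (D T : dist) : Prop :=
  exists l : list (R * network * dist),
    Forall (fun t => 0 < fst (fst t) /\ tau_hat (snd (fst t)) (snd t)) l /\
    (forall N, D N = fold_right (fun t acc => fst (fst t) * dirac (snd (fst t)) N + acc) 0 l) /\
    (forall N, T N = fold_right (fun t acc => fst (fst t) * snd t N + acc) 0 l).

Definition wtau (M : network) (D : dist) : Prop :=
  clos_refl_trans dist lift_tau_hat (dirac M) D.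

Definition pchoice (p : R) (P Q : proc) : choice := [(p, P); (1 - p, Q)].

Definition gsnd (u : term) (p : R) : proc :=
  Tau (pchoice p (Snd u [(1, Nil)]) Nil).

Definition gresnd (u : term) (p : R) : proc := Sigma [(1, gsnd u p)].

(** fwd_p = ?(x).resnd<x>_p = fix X. |_ ?(x).resnd<x>_p _| X   (x = 0, X = 0) *)
Definition gfwd (p : R) : proc :=
  Fix 0 (RcvTO 0 [(1, gresnd (TVar 0) p)] [(1, PVar 0)]).

Definition netO (N : network) (I J : list nat) (m n : nat -> nat)
  (nu : nat -> list nat) (v : V) (q : nat -> R) : network :=
  Par N (Par (prodn (fun i => Node (m i) Nil (nu (m i))) I)
             (prodn (fun j => Node (n j) (gresnd (TVal v) (q j)) (nu (n j))) J)).

Definition netOI (N : network) (I1 I2 I3 J : list nat) (m n : nat -> nat)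
  (nu : nat -> list nat) (v : V) (p q : nat -> R) : network :=
  Par N (Par (prodn (fun i => Node (m i) (Snd (TVal v) [(1, Nil)]) (nu (m i))) I1)
        (Par (prodn (fun i => Node (m i) Nil (nu (m i))) I2)
        (Par (prodn (fun i => Node (m i) (gsnd (TVal v) (p i)) (nu (m i))) I3)
             (prodn (fun j => Node (n j) (gresnd (TVal v) (q j)) (nu (n j))) J)))).

End PTCWS.

Arguments Nil {V}.
Arguments PVar {V}.
Arguments Zero {V}.
Arguments Bot {V}.
Arguments LTau {V}.
Arguments LSigma {V}.

(* Main.v *)
Require Import Defs.
From Stdlib Require Import Reals List Permutation.
From Stdlib Require Import Relations Lra FunctionalExtensionality ClassicalEpsilon.
Import ListNotations.
Open Scope R_scope.

Fixpoint rk {V} (P : proc V) : bool :=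
  match P with Fix _ P' => rk P' | RcvTO _ _ _ => true | _ => false end.

Lemma rk_subst {V} (Q : proc V) X : forall P, rk Q = rk P -> rk (subst_proc Q X P) = rk P.
Proof.
  induction P as [| u C | x C D | C | C | Y | Y P' IH]; simpl; intros H; auto.
  - destruct (Nat.eqb Y X); auto.
  - destruct (Nat.eqb Y X); simpl; auto.
Qed.

Lemma scong_perm {V B} (g : nat * proc V * list nat -> B) :
  (forall n X P nu, g (n, Fix X P, nu) = g (n, subst_proc (Fix X P) X P, nu)) ->
  forall A C, scong A C -> Permutation (map g (nodes A)) (map g (nodes C)).
Proof.
  intros Hg A C H; induction H; simpl; rewrite ?map_app.
  - apply Permutation_refl.
  - now apply Permutation_sym.
  - eapply Permutation_trans; eauto.
  - now apply Permutation_app.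
  - apply Permutation_app_comm.
  - rewrite ?map_app, <- ?app_assoc. apply Permutation_refl.
  - rewrite app_nil_r; apply Permutation_refl.
  - rewrite Hg. apply Permutation_refl.
Qed.

Lemma not_rcv {V} (P : proc V) : rk P = false -> ~ rcv P.
Proof.
  intros Hr [n0 [nu0 [x [C [D Hs]]]]].
  assert (Hp := scong_perm (fun t => rk (snd (fst t))) ltac:(intros; simpl; symmetry; apply rk_subst; reflexivity) _ _ Hs).
  simpl in Hp. apply Permutation_length_1 in Hp. congruence.
Qed.

Lemma nbrs_perm {V} (A C : network V) : scong A C -> Permutation (node_nbrs A) (node_nbrs C).
Proof. intros H. apply (scong_perm (fun t => (fst (fst t), snd t))); auto. Qed.

Lemma nds_nbrs {V} (M : network V) : nds M = map fst (node_nbrs M).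
Proof. unfold node_nbrs. induction M; simpl; auto. rewrite !map_app, IHM1, IHM2. reflexivity. Qed.

Lemma dirac_eq {V} (A : network V) : dirac A A = 1.
Proof. unfold dirac. destruct excluded_middle_informative; congruence. Qed.
Lemma dirac_ne {V} (A B : network V) : B <> A -> dirac A B = 0.
Proof. unfold dirac. destruct excluded_middle_informative; congruence. Qed.

Lemma dirac_par {V} (A B M1 M2 : network V) : dirac (Par A B) (Par M1 M2) = dirac A M1 * dirac B M2.
Proof.
  destruct (excluded_middle_informative (M1 = A)); destruct (excluded_middle_informative (M2 = B)); subst.
  - rewrite !dirac_eq; lra.
  - rewrite (dirac_ne (Par A B)), (dirac_ne B) by congruence. lra.
  - rewrite (dirac_ne (Par A B)), (dirac_ne A) by congruence. lra.
  - rewrite (dirac_ne (Par A B)), (dirac_ne A) by congruence. lra.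
Qed.

Lemma dpar_dirac {V} (A B : network V) : dpar (dirac A) (dirac B) = dirac (Par A B).
Proof.
  apply functional_extensionality; intros x; destruct x; simpl;
  try (rewrite dirac_ne by discriminate; reflexivity).
  symmetry; apply dirac_par.
Qed.

Inductive nctx (V : Type) := Hole | CL (c : nctx V) (M : network V) | CR (M : network V) (c : nctx V).
Arguments Hole {V}. Arguments CL {V}. Arguments CR {V}.
Fixpoint fill {V} (c : nctx V) X := match c with Hole => X | CL c M => Par (fill c X) M | CR M c => Par M (fill c X) end.
Fixpoint sibs {V} (c : nctx V) := match c with Hole => [] | CL c M => M :: sibs c | CR M c => M :: sibs c end.
Fixpoint cdist {V} (c : nctx V) (D : Defs.dist V) := match c with Hole => D | CL c M => dpar (cdist c D) (dirac M) | CR M c => dpar (dirac M) (cdist c D) end.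

Lemma nodes_fill {V} (c : nctx V) X : Permutation (nodes (fill c X)) (nodes X ++ flat_map (@nodes V) (sibs c)).
Proof.
  induction c; simpl.
  - rewrite app_nil_r; apply Permutation_refl.
  - eapply Permutation_trans. apply Permutation_app_tail, IHc.
    rewrite <- app_assoc. apply Permutation_app_head. apply Permutation_app_comm.
  - eapply Permutation_trans. apply Permutation_app_head, IHc.
    rewrite !app_assoc. apply Permutation_app_tail, Permutation_app_comm.
Qed.

Lemma cdist_dirac {V} (c : nctx V) X : cdist c (dirac X) = dirac (fill c X).
Proof. induction c; simpl; rewrite ?IHc, ?dpar_dirac; reflexivity. Qed.

Lemma cdist_two {V} (c : nctx V) a b X Y :
  cdist c (fun N => a * dirac X N + b * dirac Y N) = fun N => a * dirac (fill c X) N + b * dirac (fill c Y) N.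
Proof.
  induction c; simpl; auto; rewrite IHc; apply functional_extensionality; intros x; destruct x; simpl;
  try (rewrite !dirac_ne by discriminate; lra).
  all: rewrite !dirac_par; lra.
Qed.

Lemma tau_ctx {V} (c : nctx V) X D : Forall (fun M => not_bot_par M) (sibs c) -> step X LTau D -> step (fill c X) LTau (cdist c D).
Proof.
  induction c; simpl; intros HF Hs; auto; inversion HF; subst.
  - apply st_taul; auto.
  - apply st_taur; auto.
Qed.

Lemma minus_nds_In {V} k nu (M : network V) : In k (minus_nds nu M) -> In k nu /\ ~ In k (nds M).
Proof.
  unfold minus_nds. rewrite filter_In. intros [H1 H2]. split; auto.
  intros Hin. apply Bool.negb_true_iff in H2. 
  assert (existsb (Nat.eqb k) (nds M) = true) by (apply existsb_exists; exists k; split; auto; apply Nat.eqb_refl).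
  congruence.
Qed.

Lemma bcast_ctx {V} (c : nctx V) X mm v nu D :
  Forall (fun M => step M (LRcv mm v) (dirac M)) (sibs c) -> step X (LSnd mm v nu) D ->
  exists nu', (forall k, In k nu' -> In k nu /\ ~ In k (flat_map (@nds V) (sibs c))) /\
     step (fill c X) (LSnd mm v nu') (cdist c D).
Proof.
  induction c; simpl; intros HF Hs.
  - exists nu; split; auto.
  - inversion HF; subst. destruct (IHc H2 Hs) as [nu1 [Hn Hst]].
    exists (minus_nds nu1 M); split.
    + intros k Hk. apply minus_nds_In in Hk as [Hk1 Hk2]. apply Hn in Hk1 as [? ?].
      split; auto. rewrite in_app_iff; tauto.
    + apply st_bcastl; auto.
  - inversion HF; subst. destruct (IHc H2 Hs) as [nu1 [Hn Hst]].
    exists (minus_nds nu1 M); split.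
    + intros k Hk. apply minus_nds_In in Hk as [Hk1 Hk2]. apply Hn in Hk1 as [? ?].
      split; auto. rewrite in_app_iff; tauto.
    + apply st_bcastr; auto.
Qed.

Lemma rcv_all {V} (M : network V) mm v : ~ has_bot M ->
  (forall k P mu, In (k,P,mu) (nodes M) -> k <> mm /\ ~ (In mm mu /\ rcv P)) ->
  step M (LRcv mm v) (dirac M).
Proof.
  induction M; simpl; intros Hb H.
  - apply st_rcv0.
  - rewrite <- dpar_dirac. apply st_rcvpar.
    + apply IHM1; [tauto|]. intros; apply H; apply in_app_iff; auto.
    + apply IHM2; [tauto|]. intros; apply H; apply in_app_iff; auto.
  - destruct (H n P nu (or_introl eq_refl)). apply st_rcvenb; auto.
  - tauto.
Qed.

Definition upd {V} (f : nat -> proc V) i P := fun j => if Nat.eqb j i then P else f j.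
Definition PR {V} (m : nat -> nat) (nu : nat -> list nat) (f : nat -> proc V) l :=
  prodn (fun i => Node (m i) (f i) (nu (m i))) l.
Definition Wf {V} (N : network V) I1 I2 I3 PJ m nu f :=
  Par N (Par (PR m nu f I1) (Par (PR m nu f I2) (Par (PR m nu f I3) PJ))).

Lemma prodn_ext {V} (F G : nat -> network V) l : (forall i, In i l -> F i = G i) -> prodn F l = prodn G l.
Proof. induction l; simpl; intros H; auto. rewrite H, IHl; auto. Qed.

Lemma nodes_prodn {V} a (F : nat -> proc V) b l :
  nodes (prodn (fun i => Node (a i) (F i) (b i)) l) = map (fun i => (a i, F i, b i)) l.
Proof. induction l; simpl; auto. rewrite IHl; auto. Qed.

Lemma nbrs_par {V} (A B : network V) : node_nbrs (Par A B) = node_nbrs A ++ node_nbrs B.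
Proof. unfold node_nbrs; simpl; apply map_app. Qed.

Lemma nbrs_prodn {V} a (F : nat -> proc V) b l :
  node_nbrs (prodn (fun i => Node (a i) (F i) (b i)) l) = map (fun i => (a i, b i)) l.
Proof. unfold node_nbrs. rewrite nodes_prodn, map_map. reflexivity. Qed.

Lemma hasbot_prodn {V} a (F : nat -> proc V) b l : ~ has_bot (prodn (fun i => Node (a i) (F i) (b i)) l).
Proof. induction l; simpl; tauto. Qed.

Lemma hasbot_sibs {V} (c : nctx V) X : ~ has_bot (fill c X) -> Forall (fun M => ~ has_bot M) (sibs c).
Proof. induction c; simpl; intros H; constructor; tauto. Qed.

Lemma nbp_of {V} (M : network V) : ~ has_bot M -> not_bot_par M.
Proof. destruct M; simpl; auto. destruct M1; simpl; tauto. Qed.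

Definition nm {V} (t : nat * proc V * list nat) := fst (fst t).

Lemma nds_nodes {V} (M : network V) : nds M = map nm (nodes M).
Proof. induction M; simpl; auto. rewrite map_app, IHM1, IHM2; auto. Qed.

Lemma flat_nds {V} (l : list (network V)) : flat_map (@nds V) l = map nm (flat_map (@nodes V) l).
Proof. induction l; simpl; auto. rewrite map_app, IHl, nds_nodes; auto. Qed.

Lemma nodup_disj {A} (l1 l2 : list A) x : NoDup (l1 ++ l2) -> In x l1 -> In x l2 -> False.
Proof.
  induction l1 as [|a l1 IH]; simpl; intros H H1 H2; auto. inversion H as [|? ? Ha Hn]; subst.
  destruct H1; subst; eauto. apply Ha, in_app_iff; auto.
Qed.

Lemma upd_same {V} (f : nat -> proc V) i : upd f i (f i) = f.
Proof. apply functional_extensionality; intros j; unfold upd. destruct (Nat.eqb_spec j i); subst; auto. Qed.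

Lemma PR_upd_notin {V} m nu (f : nat -> proc V) i P l : ~ In i l -> PR m nu (upd f i P) l = PR m nu f l.
Proof.
  intros H; unfold PR; apply prodn_ext; intros j Hj; unfold upd.
  destruct (Nat.eqb_spec j i); subst; tauto.
Qed.

Lemma ctx_PR {V} m nu (f : nat -> proc V) i l : NoDup l -> In i l ->
  exists c, forall P, PR m nu (upd f i P) l = fill c (Node (m i) P (nu (m i))).
Proof.
  induction l as [|a l IH]; simpl; intros Hn Hi; [tauto|]. inversion Hn; subst.
  destruct (Nat.eq_dec a i).
  - subst. exists (CL Hole (PR m nu f l)). intros P. simpl.
    unfold upd at 1; rewrite Nat.eqb_refl. f_equal. apply PR_upd_notin; auto.
  - destruct Hi as [Hi|Hi]; [congruence|]. destruct (IH H2 Hi) as [c Hc].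
    exists (CR (Node (m a) (f a) (nu (m a))) c). intros P; simpl.
    rewrite <- Hc. unfold upd at 1. destruct (Nat.eqb_spec a i); [congruence|]. reflexivity.
Qed.

Lemma ctx_W {V} (N : network V) I1 I2 I3 PJ m nu f i : NoDup (I1 ++ I2 ++ I3) -> In i (I1 ++ I2 ++ I3) ->
  exists c, forall P, Wf N I1 I2 I3 PJ m nu (upd f i P) = fill c (Node (m i) P (nu (m i))).
Proof.
  intros Hn Hi. unfold Wf.
  assert (N1 := NoDup_app_remove_r _ _ Hn). assert (N23 := NoDup_app_remove_l _ _ Hn).
  assert (N2 := NoDup_app_remove_r _ _ N23). assert (N3 := NoDup_app_remove_l _ _ N23).
  apply in_app_iff in Hi as [Hi|Hi]; [|apply in_app_iff in Hi as [Hi|Hi]].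
  - destruct (ctx_PR m nu f i I1 N1 Hi) as [c Hc].
    exists (CR N (CL c (Par (PR m nu f I2) (Par (PR m nu f I3) PJ)))). intros P; simpl.
    rewrite Hc, !(PR_upd_notin m nu f i P); auto.
    + intros H; apply (nodup_disj _ _ _ Hn Hi); apply in_app_iff; auto.
    + intros H; apply (nodup_disj _ _ _ Hn Hi); apply in_app_iff; auto.
  - destruct (ctx_PR m nu f i I2 N2 Hi) as [c Hc].
    exists (CR N (CR (PR m nu f I1) (CL c (Par (PR m nu f I3) PJ)))). intros P; simpl.
    rewrite Hc, !(PR_upd_notin m nu f i P); auto.
    + intros H; apply (nodup_disj _ _ _ N23 Hi); auto.
    + intros H; apply (nodup_disj _ _ _ Hn H); apply in_app_iff; auto.
  - destruct (ctx_PR m nu f i I3 N3 Hi) as [c Hc].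
    exists (CR N (CR (PR m nu f I1) (CR (PR m nu f I2) (CL c PJ)))). intros P; simpl.
    rewrite Hc, !(PR_upd_notin m nu f i P); auto.
    + intros H; apply (nodup_disj _ _ _ N23 H); auto.
    + intros H; apply (nodup_disj _ _ _ Hn H); apply in_app_iff; auto.
Qed.

Lemma lift_single {V} (X : network V) D : step X LTau D -> lift_tau_hat (dirac X) D.
Proof.
  intros H. exists [(1, X, D)]. split; [constructor; [simpl; split; [lra| left; auto]| constructor]|].
  split; intros; simpl; lra.
Qed.

Fixpoint nilify {V} (K : list nat) (f : nat -> proc V) := match K with [] => f | a :: K => nilify K (upd f a Nil) end.

Lemma nilify_notin {V} K (f : nat -> proc V) i : ~ In i K -> nilify K f i = f i.
Proof.
  revert f; induction K; simpl; intros f H; auto. rewrite IHK by tauto. unfold upd.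
  destruct (Nat.eqb_spec i a); subst; tauto.
Qed.

Lemma nilify_in {V} K (f : nat -> proc V) i : In i K -> nilify K f i = Nil.
Proof.
  revert f; induction K; simpl; intros f H; [tauto|].
  destruct (in_dec Nat.eq_dec i K); auto.
  rewrite nilify_notin by auto. destruct H; [subst|tauto]. unfold upd; rewrite Nat.eqb_refl; auto.
Qed.

Lemma prodn_app {V} (F : nat -> network V) l1 l2 : scong (Par (prodn F l1) (prodn F l2)) (prodn F (l1 ++ l2)).
Proof.
  induction l1; simpl.
  - eapply sc_trans. apply sc_comm. apply sc_unit.
  - eapply sc_trans. apply sc_assoc. apply sc_par; auto. apply sc_refl.
Qed.

Lemma prodn_perm {V} (F : nat -> network V) l1 l2 : Permutation l1 l2 -> scong (prodn F l1) (prodn F l2).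
Proof.
  induction 1; simpl.
  - apply sc_refl.
  - apply sc_par; auto. apply sc_refl.
  - eapply sc_trans. apply sc_sym, sc_assoc. eapply sc_trans. 2: apply sc_assoc.
    apply sc_par; [apply sc_comm|apply sc_refl].
  - eapply sc_trans; eauto.
Qed.

Theorem lemmaA4 (V : Type) (I J : list nat) (v : V) (p q : nat -> R)
  (m n : nat -> nat) (nu : nat -> list nat) (N M : network V) :
  NoDup I -> NoDup J -> (forall i, In i I -> ~ In i J) ->
  (forall i, In i I -> 0 <= p i <= 1) ->
  (forall j, In j J -> 0 <= q j <= 1) ->
  well_formed M ->
  ~ has_bot N ->
  scong M (Par N (Par (prodn (fun i => Node (m i) (gsnd (TVal v) (p i)) (nu (m i))) I)
                      (prodn (fun j => Node (n j) (gfwd V (q j)) (nu (n j))) J))) ->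
  (forall i, In i I ->
     (forall j, In j J -> In (n j) (nu (m i))) /\
     (forall k, In k (nu (m i)) -> In k (nds M))) ->
  (forall i, In i I -> forall k P mu,
     In (k, P, mu) (nodes N) -> In k (nu (m i)) -> ~ rcv P) ->
  forall I1 I2 I3 : list nat, Permutation (I1 ++ I2 ++ I3) I ->
  exists O', scong O' (netO N I J m n nu v q) /\
             wtau (netOI N I1 I2 I3 J m n nu v p q) (dirac O').
Proof.
  intros HI HJ HIJ Hp Hq HWF HNb HM Hnb Hrcv I1 I2 I3 Hperm.
  assert (HL : NoDup (I1 ++ I2 ++ I3)) by (apply (Permutation_NoDup (Permutation_sym Hperm)); auto).
  assert (HLI : forall i, In i (I1 ++ I2 ++ I3) -> In i I) by (intros; eapply Permutation_in; eauto).
  set (PJ := prodn (fun j => Node (n j) (gresnd (TVal v) (q j)) (nu (n j))) J).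
  set (W := fun f : nat -> proc V => Wf N I1 I2 I3 PJ m nu f).
  set (h := fun i => (m i, nu (m i))).
  assert (Hnbrs : forall f, Permutation (node_nbrs M) (node_nbrs (W f))).
  { intros f. eapply Permutation_trans. apply nbrs_perm, HM.
    unfold W, Wf, PR, PJ. rewrite !nbrs_par, !nbrs_prodn.
    apply Permutation_app_head. rewrite !app_assoc, <- !map_app.
    apply Permutation_app_tail. apply Permutation_map. rewrite <- app_assoc. apply Permutation_sym, Hperm. }
  destruct HWF as [WF1 [WF2 [WF3 _]]].
  assert (HnodupW : forall f, NoDup (nds (W f))).
  { intros f. rewrite nds_nbrs. rewrite nds_nbrs in WF2.
    exact (Permutation_NoDup (Permutation_map fst (Hnbrs f)) WF2). }
  assert (Hmi : forall i, In i (I1 ++ I2 ++ I3) -> In (m i, nu (m i)) (node_nbrs M)).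
  { intros i Hi. apply (Permutation_in _ (Permutation_sym (Hnbrs (fun _ => Nil)))).
    unfold W, Wf, PR. rewrite !nbrs_par, !nbrs_prodn. rewrite !in_app_iff, !in_map_iff.
    rewrite !in_app_iff in Hi. destruct Hi as [Hi|[Hi|Hi]]; eauto 10. }
  assert (HWnodes : forall f t, In t (nodes (W f)) -> In t (nodes N) \/
      (exists j, In j (I1 ++ I2 ++ I3) /\ t = (m j, f j, nu (m j))) \/
      (exists j, In j J /\ t = (n j, gresnd (TVal v) (q j), nu (n j)))).
  { intros f t Ht. unfold W, Wf, PR, PJ in Ht. simpl in Ht. rewrite !nodes_prodn in Ht.
    rewrite !in_app_iff, !in_map_iff in Ht.
    destruct Ht as [Ht|[[j [E Hj]]|[[j [E Hj]]|[[j [E Hj]]|[j [E Hj]]]]]]; auto;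
    right; [left|left|left|right]; exists j; split; auto; rewrite !in_app_iff; auto. }
  set (goodf := fun f : nat -> proc V => forall i, f i = Snd (TVal v) [(1, Nil)] \/ f i = Nil \/ f i = gsnd (TVal v) (p i)).
  assert (Hsib : forall f i c, goodf f -> In i (I1 ++ I2 ++ I3) -> W f = fill c (Node (m i) (f i) (nu (m i))) ->
     Forall (fun M0 => step M0 (LRcv (m i) v) (dirac M0)) (sibs c) /\ Forall (fun M0 => not_bot_par M0) (sibs c) /\
     (forall k, In k (nu (m i)) -> In k (flat_map (@nds V) (sibs c)))).
  { intros f i c Hg Hi HWf.
    assert (HnbW : ~ has_bot (W f)).
    { unfold W, Wf, PR, PJ; simpl. pose proof (hasbot_prodn m f (fun i => nu (m i)) I1).
      pose proof (hasbot_prodn m f (fun i => nu (m i)) I2). pose proof (hasbot_prodn m f (fun i => nu (m i)) I3).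
      pose proof (hasbot_prodn n (fun j => gresnd (TVal v) (q j)) (fun j => nu (n j)) J). tauto. }
    assert (Hsb : Forall (fun M0 => ~ has_bot M0) (sibs c)) by (apply (hasbot_sibs c (Node (m i) (f i) (nu (m i)))); rewrite <- HWf; auto).
    assert (Hpn := nodes_fill c (Node (m i) (f i) (nu (m i)))). rewrite <- HWf in Hpn.
    assert (Hnd : NoDup (map nm (nodes (W f)))) by (rewrite <- nds_nodes; auto).
    assert (Hnd2 := Permutation_NoDup (Permutation_map nm Hpn) Hnd). simpl in Hnd2.
    apply NoDup_cons_iff in Hnd2 as [Hmin _].
    split; [|split].
    - rewrite Forall_forall. intros M0 HM0. apply rcv_all.
      + rewrite Forall_forall in Hsb; auto.
      + intros k P mu Ht.
        assert (Ht' : In (k, P, mu) (flat_map (@nodes V) (sibs c))) by (apply in_flat_map; eauto).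
        assert (HtW : In (k, P, mu) (nodes (W f))) by (apply (Permutation_in _ (Permutation_sym Hpn)); simpl; auto).
        split.
        * intros E; subst k. apply Hmin. apply in_map_iff. exists (m i, P, mu); auto.
        * intros [Hin Hr].
          destruct (HWnodes f _ HtW) as [HN|[[j [Hj E]]|[j [Hj E]]]].
          -- assert (Hkm : In (k, mu) (node_nbrs M)).
             { apply (Permutation_in _ (Permutation_sym (Hnbrs f))). unfold node_nbrs.
               apply in_map_iff. exists (k, P, mu); auto. }
             apply (WF3 _ _ _ _ (Hmi i Hi) Hkm) in Hin.
             eapply Hrcv; eauto.
          -- inversion E; subst. revert Hr. apply not_rcv.
             destruct (Hg j) as [E'|[E'|E']]; rewrite E'; reflexivity.
          -- inversion E; subst. revert Hr. apply not_rcv. reflexivity.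
    - rewrite Forall_forall in *. intros; apply nbp_of; auto.
    - intros k Hk. destruct (Hnb i (HLI i Hi)) as [_ Hk2]. apply Hk2 in Hk as Hk'.
      rewrite nds_nbrs in Hk'. apply in_map_iff in Hk' as [[k' mu] [E Hk']]. simpl in E; subst k'.
      apply (Permutation_in _ (Hnbrs f)) in Hk'.
      assert (HkW : In k (map nm (nodes (W f)))).
      { unfold node_nbrs in Hk'. apply in_map_iff in Hk' as [t [Et Ht]]. apply in_map_iff.
        exists t; split; auto. unfold nm. inversion Et; auto. }
      apply (Permutation_in _ (Permutation_map nm Hpn)) in HkW. simpl in HkW.
      destruct HkW as [E|HkW].
      + exfalso. subst k. apply (WF1 _ _ (Hmi i Hi)); auto.
      + rewrite flat_nds; auto. }
  assert (Hone : forall f i, goodf f -> In i (I1 ++ I2 ++ I3) ->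
     clos_refl_trans _ (@lift_tau_hat V) (dirac (W f)) (dirac (W (upd f i Nil)))).
  { intros f i Hg Hi.
    destruct (ctx_W N I1 I2 I3 PJ m nu f i HL Hi) as [c Hc].
    assert (HWf : W f = fill c (Node (m i) (f i) (nu (m i)))).
    { rewrite <- Hc. unfold W. rewrite upd_same. reflexivity. }
    unfold W at 2. rewrite (Hc Nil).
    destruct (Hsib f i c Hg Hi HWf) as [Hrc [Hnbp Hincl]].
    assert (Hb : step (fill c (Node (m i) (Snd (TVal v) [(1, Nil)]) (nu (m i)))) LTau
                      (dirac (fill c (Node (m i) Nil (nu (m i)))))).
    { destruct (bcast_ctx c _ (m i) v (nu (m i)) _ Hrc (st_snd (m i) v [(1, Nil)] (nu (m i)))) as [nu' [Hn Hs]].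
      replace nu' with (@nil nat) in Hs.
      - apply st_shh in Hs. rewrite <- cdist_dirac.
        replace (dirac (Node (m i) Nil (nu (m i)))) with (sem_node (m i) [(1, @Nil V)] (nu (m i))); auto.
        apply functional_extensionality; intros x. unfold sem_node; simpl. lra.
      - destruct nu' as [|k r]; auto. destruct (Hn k (or_introl eq_refl)) as [H1 H2].
        exfalso; apply H2, Hincl, H1. }
    fold (W f). rewrite HWf.
    destruct (Hg i) as [E|[E|E]]; rewrite E.
    - apply rt_step, lift_single, Hb.
    - apply rt_refl.
    - set (A := fill c (Node (m i) (Snd (TVal v) [(1, Nil)]) (nu (m i)))) in *.
      set (B := fill c (Node (m i) Nil (nu (m i)))) in *.
      assert (Htau : step (fill c (Node (m i) (gsnd (TVal v) (p i)) (nu (m i)))) LTau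
                (fun x => p i * dirac A x + (1 - p i) * dirac B x)).
      { unfold A, B. rewrite <- cdist_two. apply tau_ctx; auto.
        replace (fun N0 => p i * dirac (Node (m i) (Snd (TVal v) [(1, Nil)]) (nu (m i))) N0 +
                 (1 - p i) * dirac (Node (m i) Nil (nu (m i))) N0)
          with (sem_node (m i) (pchoice (p i) (Snd (TVal v) [(1, @Nil V)]) Nil) (nu (m i))).
        - apply st_tau.
        - apply functional_extensionality; intros x. unfold sem_node, pchoice; simpl. lra. }
      eapply rt_trans. apply rt_step, lift_single, Htau. apply rt_step.
      destruct (Hp i (HLI i Hi)) as [Hp0 Hp1].
      destruct (Req_dec (p i) 0) as [E0|E0]; [|destruct (Req_dec (p i) 1) as [E1|E1]].
      + exists [(1, B, dirac B)]. split; [constructor; [simpl; split; [lra| right; auto]| constructor]|].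
        split; intros; simpl; rewrite ?E0; lra.
      + exists [(1, A, dirac B)]. split; [constructor; [simpl; split; [lra| left; auto]| constructor]|].
        split; intros; simpl; rewrite ?E1; lra.
      + exists [(p i, A, dirac B); (1 - p i, B, dirac B)].
        split; [constructor; [simpl; split; [lra| left; auto]| constructor; [simpl; split; [lra| right; auto]| constructor]]|].
        split; intros; simpl; lra. }
  assert (Hiter : forall K f, goodf f -> incl K (I1 ++ I2 ++ I3) ->
     clos_refl_trans _ (@lift_tau_hat V) (dirac (W f)) (dirac (W (nilify K f)))).
  { induction K as [|a K IH]; simpl; intros f Hg Hinc.
    - apply rt_refl.
    - eapply rt_trans. apply (Hone f a Hg); apply Hinc; left; auto.
      apply IH. 
      + intros j; unfold upd. destruct (Nat.eqb j a); auto.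
      + intros x Hx; apply Hinc; right; auto. }
  set (f0 := fun i => if in_dec Nat.eq_dec i I1 then Snd (TVal v) [(1, Nil)]
                      else if in_dec Nat.eq_dec i I2 then Nil else gsnd (TVal v) (p i)).
  assert (Hg0 : goodf f0).
  { intros i; unfold f0. destruct (in_dec Nat.eq_dec i I1); auto. destruct (in_dec Nat.eq_dec i I2); auto. }
  assert (E0 : netOI N I1 I2 I3 J m n nu v p q = W f0).
  { unfold netOI, W, Wf, PR, PJ. f_equal. f_equal; [|f_equal; [|f_equal]]; apply prodn_ext; intros i Hi; unfold f0.
    - destruct (in_dec Nat.eq_dec i I1); tauto.
    - destruct (in_dec Nat.eq_dec i I1) as [H1|H1].
      + exfalso; apply (nodup_disj _ _ _ HL H1); apply in_app_iff; auto.
      + destruct (in_dec Nat.eq_dec i I2); tauto.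
    - destruct (in_dec Nat.eq_dec i I1) as [H1|H1].
      + exfalso; apply (nodup_disj _ _ _ HL H1); apply in_app_iff; auto.
      + destruct (in_dec Nat.eq_dec i I2) as [H2|H2]; auto.
        exfalso; apply (nodup_disj _ _ _ (NoDup_app_remove_l _ _ HL) H2); auto. }
  exists (W (nilify (I1 ++ I2 ++ I3) f0)). split.
  - assert (EW : W (nilify (I1 ++ I2 ++ I3) f0) =
       Par N (Par (prodn (fun i => Node (m i) Nil (nu (m i))) I1)
             (Par (prodn (fun i => Node (m i) Nil (nu (m i))) I2)
             (Par (prodn (fun i => Node (m i) Nil (nu (m i))) I3) PJ)))).
    { unfold W, Wf, PR. f_equal. f_equal; [|f_equal; [|f_equal]]; apply prodn_ext; intros i Hi;
      rewrite nilify_in; auto; rewrite !in_app_iff; auto. }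
    rewrite EW. unfold netO. apply sc_par; [apply sc_refl|].
    set (F := fun i => Node (m i) Nil (nu (m i))).
    eapply sc_trans. apply sc_par; [apply sc_refl|]. apply sc_sym, sc_assoc.
    eapply sc_trans. apply sc_sym, sc_assoc.
    apply sc_par; [|apply sc_refl].
    eapply sc_trans. apply sc_par; [apply sc_refl|]. apply prodn_app.
    eapply sc_trans. apply prodn_app. apply prodn_perm; auto.
  - unfold wtau. rewrite E0. apply Hiter; auto. intros x; auto.
Qed.
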